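(* Consider the explicit scheme on a uniform one-dimensional grid of spacing $h$, \[ \Phi^{1D,e}_{t+dt}(u):=u(\cdot,t)+dt\,F^{1D,e}[u(\cdot,t)], \] i.e. the forward Euler discretization of $u_t=F^{1D}[u]-f$ with $f=0$. If $dt\le(h^4/2)^{1/3}$, then the solution map satisfies the maximum principle \[ \min\Phi^{1D,e}_t(u)\le\Phi^{1D,e}_{t+dt}(u)\le\max\Phi^{1D,e}_t(u). \]
   Context: $F^{1D}[u]=(u_x^2u_{xx})^{1/3}$. With $A(p,q)=(p^2q)^{1/3}$ (real cube root), $A^+(p,q)=A(p^+,q^+)$, $A^-(p,q)=A(p^-,q^-)$, $x^+=\max(x,0)$, $x^-=\min(x,0)$, the (unregularized) scheme is $-F^{1D,e}[u]=A^+(\lvert u_x^h\rvert^+,-u_{xx}^h)+A^-(-\lvert u_x^h\rvert^-,-u_{xx}^h)$, with $\lvert u_x^h\rvert^+=\max\{\frac{u(x)-u(x+h)}h,\frac{u(x)-u(x-h)}h,0\}$, $-\lvert u_x^h\rvert^-=\min\{\frac{u(x)-u(x+h)}h,\frac{u(x)-u(x-h)}h,0\}$, $u_{xx}^h=\frac{u(x+h)-2u(x)+u(x-h)}{h^2}$. $\Phi^{1D,e}_t(u)$ denotes the grid function at time $t$; min and max are over grid points. *)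

(* Defs.v *)
From Stdlib Require Import Reals ZArith Lra.
Open Scope R_scope.

Definition cbrt (x : R) : R :=
  if Rlt_dec 0 x then Rpower x (1/3)
  else if Rlt_dec x 0 then - Rpower (- x) (1/3) else 0.

Definition pos_part (x : R) : R := Rmax x 0.
Definition neg_part (x : R) : R := Rmin x 0.

Definition Afun (p q : R) : R := cbrt (p ^ 2 * q).
Definition Aplus (p q : R) : R := Afun (pos_part p) (pos_part q).
Definition Aminus (p q : R) : R := Afun (neg_part p) (neg_part q).

(* Grid functions on the uniform grid h*Z: u i is the value at x = i*h. *)
Definition grid := Z -> R.

Definition fwd_diff (h : R) (u : grid) (i : Z) : R := (u i - u (i + 1)%Z) / h.
Definition bwd_diff (h : R) (u : grid) (i : Z) : R := (u i - u (i - 1)%Z) / h.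

Definition absux_plus (h : R) (u : grid) (i : Z) : R :=
  Rmax (Rmax (fwd_diff h u i) (bwd_diff h u i)) 0.
Definition neg_absux_minus (h : R) (u : grid) (i : Z) : R :=
  Rmin (Rmin (fwd_diff h u i) (bwd_diff h u i)) 0.
Definition uxx (h : R) (u : grid) (i : Z) : R :=
  (u (i + 1)%Z - 2 * u i + u (i - 1)%Z) / h ^ 2.

(* F^{1D,e}[u] at grid point i (the scheme gives -F). *)
Definition F1De (h : R) (u : grid) (i : Z) : R :=
  - (Aplus (absux_plus h u i) (- uxx h u i)
     + Aminus (neg_absux_minus h u i) (- uxx h u i)).

Definition Phi_step (h dt : R) (u : grid) : grid :=
  fun i => u i + dt * F1De h u i.

(* Main.v *)
Require Import Defs.
From Stdlib Require Import Reals ZArith.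
From Stdlib Require Import Lra.
Open Scope R_scope.

Lemma key (h dt P x : R) : 0 < h -> 0 < dt -> dt <= Rpower (h ^ 4 / 2) (1/3) ->
  0 < P -> 0 < x -> x <= 2 * P ^ 3 / h -> dt * Rpower x (1/3) <= h * P.
Proof.
  intros Hh Hdt Hdt2 HP Hx Hxle.
  assert (H1 : 0 < h ^ 4 / 2) by (apply Rdiv_lt_0_compat; [apply pow_lt|]; lra).
  assert (H2 : 0 < 2 * P ^ 3 / h) by (apply Rdiv_lt_0_compat; [assert (0 < P^3) by (apply pow_lt; lra)|]; lra).
  apply Rle_trans with (Rpower (h ^ 4 / 2) (1/3) * Rpower (2 * P ^ 3 / h) (1/3)).
  - apply Rmult_le_compat.
    + lra.
    + unfold Rpower; left; apply exp_pos.
    + exact Hdt2.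
    + apply Rle_Rpower_l; lra.
  - rewrite Rpower_mult_distr by assumption.
    replace (h ^ 4 / 2 * (2 * P ^ 3 / h)) with ((h * P) ^ 3) by (field; lra).
    assert (HhP : 0 < h * P) by (apply Rmult_lt_0_compat; lra).
    rewrite <- (Rpower_pow 3 (h * P)) by exact HhP.
    rewrite Rpower_mult.
    replace (INR 3 * (1 / 3)) with 1 by (simpl; field).
    rewrite Rpower_1 by exact HhP. lra.
Qed.

Lemma cbrt_pos x : 0 < x -> cbrt x = Rpower x (1/3).
Proof. intro H. unfold cbrt. destruct (Rlt_dec 0 x); [reflexivity|lra]. Qed.
Lemma cbrt_neg x : x < 0 -> cbrt x = - Rpower (- x) (1/3).
Proof. intro H. unfold cbrt. destruct (Rlt_dec 0 x); [lra|]. destruct (Rlt_dec x 0); [reflexivity|lra]. Qed.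
Lemma cbrt0 : cbrt 0 = 0.
Proof. unfold cbrt. destruct (Rlt_dec 0 0); [lra|]. destruct (Rlt_dec 0 0); [lra|reflexivity]. Qed.

Lemma Rpower_ge0 x y : 0 <= Rpower x y.
Proof. unfold Rpower; left; apply exp_pos. Qed.

Theorem mainTheorem12 (h dt : R) (u : grid) (m M : R) :
  0 < h -> 0 < dt -> dt <= Rpower (h ^ 4 / 2) (1/3) ->
  (forall j : Z, m <= u j <= M) ->
  forall i : Z, m <= Phi_step h dt u i <= M.
Proof.
  intros Hh Hdt Hdt2 Hu i.
  unfold Phi_step, F1De, Aplus, Aminus, Afun.
  pose proof (Hu i) as Ha. pose proof (Hu (i+1)%Z) as Hb. pose proof (Hu (i-1)%Z) as Hc.
  set (a := u i) in *. set (b := u (i+1)%Z) in *. set (c := u (i-1)%Z) in *.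
  assert (Exx : - uxx h u i = (fwd_diff h u i + bwd_diff h u i) / h).
  { unfold uxx, fwd_diff, bwd_diff. fold a b c. field. lra. }
  rewrite Exx.
  set (p := fwd_diff h u i) in *. set (q := bwd_diff h u i) in *.
  assert (Ep : h * p = a - b) by (unfold p, fwd_diff; fold a b; field; lra).
  assert (Eq : h * q = a - c) by (unfold q, bwd_diff; fold a c; field; lra).
  assert (HP : h * absux_plus h u i <= a - m).
  { unfold absux_plus; fold p q.
    assert (absux_plus h u i <= (a - m) / h).
    { unfold absux_plus; fold p q. apply Rmax_lub; [apply Rmax_lub|].
      - apply Rmult_le_reg_l with h; [lra|]. field_simplify; lra.
      - apply Rmult_le_reg_l with h; [lra|]. field_simplify; lra.
      - apply Rmult_le_reg_l with h; [lra|]. field_simplify; lra. }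
    unfold absux_plus in H; fold p q in H.
    apply Rmult_le_reg_r with (/ h). apply Rinv_0_lt_compat; lra.
    replace (h * Rmax (Rmax p q) 0 * / h) with (Rmax (Rmax p q) 0) by (field; lra).
    exact H. }
  assert (HQ : - h * neg_absux_minus h u i <= M - a).
  { assert (neg_absux_minus h u i >= - (M - a) / h).
    { unfold neg_absux_minus; fold p q. apply Rle_ge. apply Rmin_glb; [apply Rmin_glb|].
      - apply Rmult_le_reg_l with h; [lra|]. field_simplify; lra.
      - apply Rmult_le_reg_l with h; [lra|]. field_simplify; lra.
      - apply Rmult_le_reg_l with h; [lra|]. field_simplify; lra. }
    apply Rge_le in H.
    apply Rmult_le_compat_l with (r := h) in H; [|lra].
    replace (h * (- (M - a) / h)) with (- (M - a)) in H by (field; lra). lra. }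
  assert (Pp : p <= absux_plus h u i) by (unfold absux_plus; fold p q; eapply Rle_trans; [apply Rmax_l|apply Rmax_l]).
  assert (Pq : q <= absux_plus h u i) by (unfold absux_plus; fold p q; eapply Rle_trans; [apply Rmax_r|apply Rmax_l]).
  assert (P0 : 0 <= absux_plus h u i) by (unfold absux_plus; apply Rmax_r).
  assert (Qp : neg_absux_minus h u i <= p) by (unfold neg_absux_minus; fold p q; eapply Rle_trans; [apply Rmin_l|apply Rmin_l]).
  assert (Qq : neg_absux_minus h u i <= q) by (unfold neg_absux_minus; fold p q; eapply Rle_trans; [apply Rmin_l|apply Rmin_r]).
  assert (Q0 : neg_absux_minus h u i <= 0) by (unfold neg_absux_minus; apply Rmin_r).
  set (P := absux_plus h u i) in *. set (Q := neg_absux_minus h u i) in *.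
  assert (Hpp : pos_part P = P) by (unfold pos_part; apply Rmax_left; lra).
  assert (Hnq : neg_part Q = Q) by (unfold neg_part; apply Rmin_left; lra).
  rewrite Hpp, Hnq.
  set (s := (p + q) / h).
  destruct (Rtotal_order s 0) as [Hs | [Hs | Hs]].
  -
    assert (E1 : pos_part s = 0) by (unfold pos_part; apply Rmax_right; lra).
    assert (E2 : neg_part s = s) by (unfold neg_part; apply Rmin_left; lra).
    rewrite E1, E2, Rmult_0_r, cbrt0, Rplus_0_l.
    assert (Hpq : p + q < 0).
    { unfold s in Hs. apply Rmult_lt_reg_r with (/ h). apply Rinv_0_lt_compat; lra.
      rewrite Rmult_0_l. exact Hs. }
    assert (HQn : Q < 0) by lra.
    assert (Hx : 0 < Q ^ 2 * (- s)).
    { apply Rmult_lt_0_compat. simpl. nra. lra. }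
    rewrite cbrt_neg by lra.
    replace (- (Q ^ 2 * s)) with (Q ^ 2 * (- s)) by ring.
    assert (K : dt * Rpower (Q ^ 2 * - s) (1 / 3) <= h * (- Q)).
    { apply key; try lra.
      unfold s. replace (2 * (- Q) ^ 3 / h) with (Q ^ 2 * (- (2 * Q) / h)) by (field; lra).
      apply Rmult_le_compat_l. simpl; nra.
      replace (- ((p + q) / h)) with ((- (p + q)) / h) by (field; lra).
      unfold Rdiv. apply Rmult_le_compat_r. left; apply Rinv_0_lt_compat; lra. lra. }
    pose proof (Rpower_ge0 (Q ^ 2 * - s) (1/3)).
    assert (0 <= dt * Rpower (Q ^ 2 * - s) (1 / 3)) by (apply Rmult_le_pos; lra).
    split; nra.
  - rewrite Hs. unfold pos_part, neg_part. rewrite Rmax_left, Rmin_left by lra.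
    rewrite !Rmult_0_r, cbrt0. lra.
  - assert (E1 : pos_part s = s) by (unfold pos_part; apply Rmax_left; lra).
    assert (E2 : neg_part s = 0) by (unfold neg_part; apply Rmin_right; lra).
    rewrite E1, E2, Rmult_0_r, cbrt0, Rplus_0_r.
    assert (Hpq : 0 < p + q).
    { unfold s in Hs. apply Rmult_lt_reg_r with (/ h). apply Rinv_0_lt_compat; lra.
      rewrite Rmult_0_l. exact Hs. }
    assert (HPp : 0 < P) by lra.
    assert (Hx : 0 < P ^ 2 * s).
    { apply Rmult_lt_0_compat. simpl. nra. lra. }
    rewrite cbrt_pos by lra.
    assert (K : dt * Rpower (P ^ 2 * s) (1 / 3) <= h * P).
    { apply key; try lra.
      unfold s. replace (2 * P ^ 3 / h) with (P ^ 2 * ((2 * P) / h)) by (field; lra).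
      apply Rmult_le_compat_l. simpl; nra.
      unfold Rdiv. apply Rmult_le_compat_r. left; apply Rinv_0_lt_compat; lra. lra. }
    pose proof (Rpower_ge0 (P ^ 2 * s) (1/3)).
    assert (0 <= dt * Rpower (P ^ 2 * s) (1 / 3)) by (apply Rmult_le_pos; lra).
    split; nra.
Qed.
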